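(* Let $n\ge3$ and let $f$ be a $\gamma_{tr3}(P_3\square P_n)$-function such that the number of vertices $v$ with $f(v)=\emptyset$ is minimum among all $\gamma_{tr3}(P_3\square P_n)$-functions. If $j\in\{0,1,\dots,n-2\}$ satisfies $|f((1,j))|=|f((2,j))|=1$, then $|f((1,j+1))|+|f((2,j+1))|=2$.
   Context: $P_m$ denotes the directed path with vertex set $\{0,1,\dots,m-1\}$ and arcs $(i,i+1)$ for $0\le i\le m-2$. The Cartesian product $D_1\square D_2$ has vertex set $V(D_1)\times V(D_2)$, with an arc from $(x_1,y_1)$ to $(x_2,y_2)$ iff either $(x_1,x_2)$ is an arc of $D_1$ and $y_1=y_2$, or $x_1=x_2$ and $(y_1,y_2)$ is an arc of $D_2$. For a digraph $D$ and positive integer $k$, a $k$-rainbow dominating function on $D$ is $f:V(D)\to\mathcal P(\{1,\dots,k\})$ such that every $v$ with $f(v)=\emptyset$ satisfies $\bigcup_{u\in N^-(v)}f(u)=\{1,\dots,k\}$, where $N^-(v)$ is the set of in-neighbors of $v$; its weight is $\sum_v|f(v)|$. It is total if additionally the subdigraph induced by $\{v:f(v)\ne\emptyset\}$ has no isolated vertex (a vertex with neither in- nor out-neighbors in it). $\gamma_{trk}(D)$ is the minimum weight of a total $k$-rainbow dominating function, and a $\gamma_{trk}(D)$-function is one attaining it. *)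

(* Defs.v *)
From mathcomp Require Import all_boot.
Set Implicit Arguments. Unset Strict Implicit. Unset Printing Implicit Defensive.

(* Colours {1,...,k} are represented by 'I_k = {0,...,k-1}. *)

Definition path_arc (m : nat) : rel 'I_m := fun i j => val j == (val i).+1.

Definition cart_arc (A B : finType) (a : rel A) (b : rel B) : rel (A * B) :=
  fun x y => (a x.1 y.1 && (x.2 == y.2)) || ((x.1 == y.1) && b x.2 y.2).

Definition P3Pn_arc (n : nat) : rel ('I_3 * 'I_n) := cart_arc (@path_arc 3) (@path_arc n).

Section Rainbow.
Variables (V : finType) (arc : rel V) (k : nat).

Definition rdf (f : V -> {set 'I_k}) : Prop :=
  forall v, f v = set0 -> \bigcup_(u | arc u v) f u = [set: 'I_k].

(* the subdigraph induced by the nonempty-labelled vertices has no isolated vertex *)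
Definition total_rdf (f : V -> {set 'I_k}) : Prop :=
  rdf f /\
  forall v, f v != set0 -> exists u, [&& u != v, f u != set0 & arc u v || arc v u].

Definition rweight (f : V -> {set 'I_k}) : nat := \sum_(v : V) #|f v|.

Definition gamma_tr_function (f : V -> {set 'I_k}) : Prop :=
  total_rdf f /\ forall g, total_rdf g -> rweight f <= rweight g.

Definition num_empty (f : V -> {set 'I_k}) : nat := #|[set v | f v == set0]|.
End Rainbow.

(* Main.v *)
Require Import Defs.
From mathcomp Require Import all_boot zify.
Set Implicit Arguments. Unset Strict Implicit. Unset Printing Implicit Defensive.

Section Grid.
Variable m : nat.
Local Notation N := m.+1.
Local Notation V := ('I_3 * 'I_N)%type.
Local Notation arc := (@P3Pn_arc N).

Definition at_ (v : V) i c := (val v.1 == i) && (val v.2 == c).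
Definition pt i c : V := (inord i, inord c).
Definition upd (f : V -> {set 'I_3}) i c L (v : V) := if at_ v i c then L else f v.
Definition S : {set 'I_3} := [set ord0].
Definition fill (X : {set 'I_3}) := if X == set0 then S else X.

Lemma cardS : #|S| = 1. Proof. exact: cards1. Qed.
Lemma S0 : S != set0. Proof. by rewrite -card_gt0 cardS. Qed.
Lemma fill0 (X : {set 'I_3}) : fill X != set0. Proof. rewrite /fill; case: ifP => [_|/negbT //]; exact: S0. Qed.
Lemma fillS (X : {set 'I_3}) : X \subset fill X. Proof. rewrite /fill; case: eqP => [->|_]; by rewrite ?sub0set. Qed.
Lemma card_fill (X : {set 'I_3}) : #|fill X| = #|X| + (X == set0). 
Proof. rewrite /fill; case: eqP => [->|_]; by rewrite ?cards0 ?cardS ?addn0. Qed.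

Lemma val_pt1 i c : i < 3 -> val (pt i c).1 = i. Proof. by move=> h; rewrite /= inordK. Qed.
Lemma val_pt2 i c : c < N -> val (pt i c).2 = c. Proof. by move=> h; rewrite /= inordK. Qed.

Lemma atP v i c : at_ v i c -> v = pt i c.
Proof. case: v => a b; rewrite /at_ /= => /andP[/eqP ha /eqP hb]. by rewrite /pt -ha -hb !inord_val. Qed.
Lemma at_pt i c : i < 3 -> c < N -> at_ (pt i c) i c.
Proof. by move=> hi hc; rewrite /at_ val_pt1 // val_pt2 // !eqxx. Qed.
Lemma atE v i c : i < 3 -> c < N -> at_ v i c = (v == pt i c).
Proof. move=> hi hc; apply/idP/eqP => [/atP //|->]; exact: at_pt. Qed.
Lemma at_ptE i c i' c' : i < 3 -> c < N -> at_ (pt i c) i' c' = (i == i') && (c == c').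
Proof. by move=> hi hc; rewrite /at_ val_pt1 // val_pt2. Qed.

Lemma arcE u v : arc u v = ((val v.1 == (val u.1).+1) && (val u.2 == val v.2)) || ((val u.1 == val v.1) && (val v.2 == (val u.2).+1)).
Proof. by []. Qed.

Lemma inN i c u : i < 3 -> c < N -> arc u (pt i c) ->
  (0 < i /\ u = pt i.-1 c) \/ (0 < c /\ u = pt i c.-1).
Proof.
move=> hi hc; rewrite arcE val_pt1 // val_pt2 //.
case/orP => /andP[/eqP h1 /eqP h2].
  left; split; first by rewrite h1.
  by apply: atP; rewrite /at_ h1 h2 /= !eqxx.
right; split; first by rewrite h2.
by apply: atP; rewrite /at_ h1 h2 /= !eqxx.
Qed.

Lemma outN i c v : i < 3 -> c < N -> arc (pt i c) v -> at_ v i.+1 c \/ at_ v i c.+1.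
Proof.
move=> hi hc; rewrite arcE val_pt1 // val_pt2 // /at_.
case/orP => /andP[h1 h2]; [left|right].
  by rewrite h1 eq_sym h2.
by rewrite h2 eq_sym h1.
Qed.

Lemma sum_upd (F : {set 'I_3} -> nat) f i c L : i < 3 -> c < N ->
  \sum_(v : V) F (upd f i c L v) + F (f (pt i c)) = \sum_(v : V) F (f v) + F L.
Proof.
move=> hi hc.
rewrite (bigD1 (pt i c)) //= [\sum_(v : V) F (f v)](bigD1 (pt i c)) //= {1}/upd at_pt //.
have -> : \sum_(v | v != pt i c) F (upd f i c L v) = \sum_(v | v != pt i c) F (f v).
  by apply: eq_bigr => v hv; rewrite /upd atE // (negbTE hv).
set s := \sum_(v | v != pt i c) F (f v); lia.
Qed.

Lemma sum_upd_out (F : {set 'I_3} -> nat) f i c L : N <= c ->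
  \sum_(v : V) F (upd f i c L v) = \sum_(v : V) F (f v).
Proof.
move=> hc; apply: eq_bigr => v _; rewrite /upd /at_.
have -> : (val v.2 == c) = false by rewrite ltn_eqF //; exact: leq_trans (ltn_ord _) hc.
by rewrite andbF.
Qed.

Lemma neE (f : V -> {set 'I_3}) : num_empty f = \sum_(v : V) (f v == set0 : nat).
Proof.
rewrite /num_empty -sum1_card big_mkcond /=.
by apply: eq_bigr => v _; rewrite inE; case: (f v == set0).
Qed.

Lemma rdf_nb (f : V -> {set 'I_3}) v u1 u2 : rdf arc f -> f v = set0 ->
  (forall u, arc u v -> u = u1 \/ u = u2) -> [set: 'I_3] \subset f u1 :|: f u2.
Proof.
move=> hr hv hn; rewrite -(hr v hv).
by apply/bigcupsP => u /hn [->|->]; [exact: subsetUl | exact: subsetUr].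
Qed.

Lemma card3 (X Y : {set 'I_3}) : [set: 'I_3] \subset X :|: Y -> 3 <= #|X| + #|Y|.
Proof.
move/subset_leq_card; rewrite cardsT card_ord => h.
apply: leq_trans h _; rewrite cardsU; lia.
Qed.

Lemma card_le3 (X : {set 'I_3}) : #|X| <= 3.
Proof. by apply: leq_trans (max_card _) _; rewrite card_ord. Qed.

Lemma transfer (f g : V -> {set 'I_3}) (C : pred V) : total_rdf arc f ->
 (forall v, v \notin C -> g v = f v) -> (forall v, v \in C -> g v != set0) ->
 (forall u v, u \in C -> arc u v -> v \notin C -> g v = set0 ->
    f u \subset g u \/ exists u1 u2, [/\ arc u1 v, arc u2 v & g u1 :|: g u2 = setT]) ->
 (forall v, v \in C -> f v = set0 -> exists u, [&& u != v, g u != set0 & arc u v || arc v u]) ->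
 total_rdf arc g.
Proof.
move=> [hr ht] hout hin hb hc; split.
  move=> v gv0.
  have vC : v \notin C by apply/negP => /hin; rewrite gv0 eqxx.
  have fv0 : f v = set0 by rewrite -hout.
  have [sub|[u1 [u2 [a1 a2 U]]]] : (forall u, arc u v -> f u \subset g u) \/
      exists u1 u2, [/\ arc u1 v, arc u2 v & g u1 :|: g u2 = setT].
    case: (boolP [exists u, (u \in C) && arc u v && ~~ (f u \subset g u)]).
      case/existsP => u /andP[/andP[uC auv] nsub].
      case: (hb u v uC auv vC gv0) => [s|E]; last by right.
      by rewrite s in nsub.
    rewrite negb_exists => /forallP H; left => u auv.
    case: (boolP (u \in C)) => uC.
      by have := H u; rewrite uC auv /= negbK.
    by rewrite hout.
  - apply/eqP; rewrite eqEsubset subsetT /= -(hr v fv0).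
    by apply/bigcupsP => u au; apply: subset_trans (sub u au) (bigcup_sup u au).
  - apply/eqP; rewrite eqEsubset subsetT /= -U subUset.
    by rewrite (bigcup_sup u1 a1) (bigcup_sup u2 a2).
move=> v gvN.
case: (boolP (v \in C)) => vC.
  case: (eqVneq (f v) set0) => [fv0|fvN]; first exact: hc.
  have [u /and3P[uv fu a]] := ht v fvN.
  exists u; rewrite uv a andbT.
  case: (boolP (u \in C)) => uC; first exact: hin.
  by rewrite hout.
have fvN : f v != set0 by rewrite -hout.
have [u /and3P[uv fu a]] := ht v fvN.
exists u; rewrite uv a andbT.
case: (boolP (u \in C)) => uC; first exact: hin.
by rewrite hout.
Qed.


Lemma nSn k : (k == k.+1) = false. Proof. by elim: k. Qed.
Lemma Snn k : (k.+1 == k) = false. Proof. by elim: k. Qed.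
Lemma at3 (v : V) c : at_ v 3 c = false.
Proof. by rewrite /at_; have := ltn_ord v.1; case: eqP => // ->. Qed.

Lemma atV (v : V) i c : at_ v i c -> val v.1 = i /\ val v.2 = c.
Proof. by case/andP => /eqP -> /eqP ->. Qed.

Lemma neq_at (u v : V) i c i' c' : at_ u i c -> at_ v i' c' -> (i != i') || (c != c') -> u != v.
Proof.
move=> /atV[a1 a2] /atV[b1 b2] h; apply/eqP => e; subst u.
by move: h; rewrite -a1 -a2 -b1 -b2 !eqxx.
Qed.

Lemma arc_at (u v : V) i c i' c' : at_ u i c -> at_ v i' c' ->
  ((i' == i.+1) && (c == c')) || ((i == i') && (c' == c.+1)) -> arc u v.
Proof. by move=> /atV[a1 a2] /atV[b1 b2]; rewrite arcE a1 a2 b1 b2. Qed.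

Lemma upd_other f i c L i' c' : i' < 3 -> c' < N -> (i != i') || (c != c') ->
  upd f i c L (pt i' c') = f (pt i' c').
Proof.
move=> hi hc h; rewrite /upd at_ptE //.
case: andP => // [[/eqP e1 /eqP e2]]; by rewrite e1 e2 !eqxx in h.
Qed.
Lemma upd_same f i c L : i < 3 -> c < N -> upd f i c L (pt i c) = L.
Proof. by move=> hi hc; rewrite /upd at_pt. Qed.


Lemma rw_upd f i c L : i < 3 -> c < N ->
  rweight (upd f i c L) + #|f (pt i c)| = rweight f + #|L|.
Proof. exact: (sum_upd (fun X => #|X|)). Qed.
Lemma ne_upd f i c L : i < 3 -> c < N ->
  num_empty (upd f i c L) + (f (pt i c) == set0) = num_empty f + (L == set0).
Proof. by rewrite !neE; exact: (sum_upd (fun X => (X == set0 : nat))). Qed.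
Lemma rw_out f i c L : N <= c -> rweight (upd f i c L) = rweight f.
Proof. exact: (sum_upd_out (fun X => #|X|)). Qed.
Lemma ne_out f i c L : N <= c -> num_empty (upd f i c L) = num_empty f.
Proof. by rewrite !neE; exact: (sum_upd_out (fun X => (X == set0 : nat))). Qed.

Lemma wit (g : V -> {set 'I_3}) (u v : V) i c i' c' : at_ u i c -> at_ v i' c' ->
  (i != i') || (c != c') -> g u != set0 ->
  (((i' == i.+1) && (c == c')) || ((i == i') && (c' == c.+1))) ||
  (((i == i'.+1) && (c' == c)) || ((i' == i) && (c == c'.+1))) ->
  [&& u != v, g u != set0 & arc u v || arc v u].
Proof.
move=> hu hv hn hg ha; rewrite (neq_at hu hv hn) hg /=.
by case/orP: ha => h; [rewrite (arc_at hu hv h) | rewrite (arc_at hv hu h) orbT].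
Qed.

End Grid.

Lemma natT : nat_of_bool true = 1. Proof. by []. Qed.
Lemma natF : nat_of_bool false = 0. Proof. by []. Qed.
Ltac natgen :=
  (repeat match goal with |- _ -> _ => let H := fresh "H" in intro H end);
  (repeat match goal with
    | H : (_ = _ :> nat) |- _ => revert H
    | H : is_true (_ <= _) |- _ => revert H
    | H : (_ = _ :> nat) -> _ |- _ => revert H
    | H : is_true (_ <= _) -> _ |- _ => revert H
    | H : is_true (~~ _) |- _ => revert H end);
  rewrite ?natT ?natF -?cards_eq0;
  (repeat first [

     match goal with |- context [#|?X|] => let c := fresh "c" in set c := #|X|; clearbody c end
   | match goal with |- context [rweight ?X] => let c := fresh "w" in set c := rweight X; clearbody c end
   | match goal with |- context [num_empty ?X] => let c := fresh "e" in set c := num_empty X; clearbody c end ]);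
  intros.

Section Main.
Variable m : nat.
Local Notation N := m.+1.
Local Notation V := ('I_3 * 'I_N)%type.
Local Notation arc := (@P3Pn_arc N).
Local Notation pt := (pt m).

Lemma main (f : V -> {set 'I_3}) : gamma_tr_function arc f ->
  (forall g : V -> {set 'I_3}, gamma_tr_function arc g -> num_empty f <= num_empty g) ->
  forall j, j.+1 < N -> #|f (pt 1 j)| = 1 -> #|f (pt 2 j)| = 1 ->
  #|f (pt 1 j.+1)| + #|f (pt 2 j.+1)| = 2.
Proof.
move=> [ft fmin] femp j hj hA hB.
have frdf := ft.1.
have better : forall g : V -> {set 'I_3}, total_rdf arc g -> rweight g <= rweight f -> num_empty f <= num_empty g.
  move=> g tg le; apply: femp; split => // h th.
  exact: leq_trans le (fmin h th).
have hj0 : j < N by lia.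
set x := f (pt 0 j.+1). set a := f (pt 1 j.+1). set b := f (pt 2 j.+1).
set p := f (pt 0 j.+2). set q := f (pt 1 j.+2). set r := f (pt 2 j.+2).
have Fa : a = set0 -> 3 <= #|x| + 1.
  move=> a0; have H : [set: 'I_3] \subset x :|: f (pt 1 j).
    apply: (rdf_nb frdf a0) => u au.
    by case: (inN (isT : 1 < 3) hj au) => [[_ ->]|[_ ->]]; [left|right].
  by have := card3 H; rewrite hA.
have Fb : b = set0 -> 3 <= #|a| + 1.
  move=> b0; have H : [set: 'I_3] \subset a :|: f (pt 2 j).
    apply: (rdf_nb frdf b0) => u au.
    by case: (inN (isT : 2 < 3) hj au) => [[_ ->]|[_ ->]]; [left|right].
  by have := card3 H; rewrite hB.
have Fp : j.+2 < N -> p = set0 -> #|x| = 3.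
  move=> hj2 p0; apply/eqP; rewrite eqn_leq card_le3 /=.
  have := rdf_nb (u1 := pt 0 j.+1) (u2 := pt 0 j.+1) frdf p0.
  rewrite setUid => H; have := subset_leq_card (H _); rewrite cardsT card_ord; apply.
  move=> u au; by case: (inN (isT : 0 < 3) hj2 au) => [[//]|[_ ->]]; left.
have Fq : j.+2 < N -> q = set0 -> 3 <= #|p| + #|a|.
  move=> hj2 q0; apply: card3; apply: (rdf_nb frdf q0) => u au.
  by case: (inN (isT : 1 < 3) hj2 au) => [[_ ->]|[_ ->]]; [left|right].
have Fr : j.+2 < N -> r = set0 -> 3 <= #|q| + #|b|.
  move=> hj2 r0; apply: card3; apply: (rdf_nb frdf r0) => u au.
  by case: (inN (isT : 2 < 3) hj2 au) => [[_ ->]|[_ ->]]; [left|right].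
have la := card_le3 a. have lb := card_le3 b. have lx := card_le3 x.
have M1 : #|a| = 0 -> False.
  move=> ha; have a0 : a = set0 by apply/cards0_eq.
  have hx := Fa a0.
  pose g := upd (upd (upd f 0 j.+1 S) 1 j.+1 S) 0 j.+2 (fill p).
  pose C : pred V := [pred v | at_ v 0 j.+1 || at_ v 1 j.+1 || at_ v 0 j.+2].
  have gC : forall v, v \in C -> g v != set0.
    move=> v vC; rewrite /g /upd. case: ifP => [_|h3]; first exact: fill0.
    case: ifP => [_|h2]; first exact: S0. case: ifP => [_|h1]; first exact: S0.
    by move: vC; rewrite inE /= h1 h2 h3.
  have gO : forall v, v \notin C -> g v = f v.
    move=> v; rewrite inE /= !negb_or => /andP[/andP[h1 h2] h3].
    by rewrite /g /upd (negbTE h1) (negbTE h2) (negbTE h3).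
  have tg : total_rdf arc g.
    apply: (transfer ft gO gC).
    - move=> u v uC auv vC gv0; left.
      move: uC; rewrite inE /= => /orP[/orP[hu|hu]|hu].
      + rewrite (atP hu) in auv.
        by case: (outN (isT : 0 < 3) hj auv) => hv; move: vC; rewrite inE /= hv ?orbT.
      + by rewrite (atP hu) -/a a0 sub0set.
      + have hj2 : j.+2 < N by case/atV: (hu) => _ <-; exact: ltn_ord.
        by rewrite (atP hu) /g upd_same //; exact: fillS.
    - move=> v vC fv0; move: (vC); rewrite inE /= => /orP[/orP[hv|hv]|hv].
      + exists (pt 1 j.+1); apply: (wit (at_pt (isT : 1 < 3) hj) hv); try lia.
        by apply: gC; rewrite inE /= (at_pt (isT : 1 < 3) hj) orbT.
      + exists (pt 0 j.+1); apply: (wit (at_pt (isT : 0 < 3) hj) hv); try lia.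
        by apply: gC; rewrite inE /= (at_pt (isT : 0 < 3) hj).
      + exists (pt 0 j.+1); apply: (wit (at_pt (isT : 0 < 3) hj) hv); try lia.
        by apply: gC; rewrite inE /= (at_pt (isT : 0 < 3) hj).
  have e1 := rw_upd f S (isT : 0 < 3) hj.
  have e2 := rw_upd (upd f 0 j.+1 S) S (isT : 1 < 3) hj.
  have n1 := ne_upd f S (isT : 0 < 3) hj.
  have n2 := ne_upd (upd f 0 j.+1 S) S (isT : 1 < 3) hj.
  rewrite upd_other // -/a in e2 n2.
  rewrite -/x in e1 n1.
  have xe : (x == set0) = false by apply/negbTE; rewrite -card_gt0; lia.
  rewrite a0 eqxx cardS cards0 (negbTE S0) xe /= in e2 n2 e1 n1.
  case: (ltnP j.+2 N) => hj2.
  - have e3 := rw_upd (upd (upd f 0 j.+1 S) 1 j.+1 S) (fill p) (isT : 0 < 3) hj2.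
    have n3 := ne_upd (upd (upd f 0 j.+1 S) 1 j.+1 S) (fill p) (isT : 0 < 3) hj2.
    rewrite !upd_other // -/p ?(negbTE (fill0 p)) ?card_fill in e3 n3; try (by lia).
    have le : rweight g <= rweight f.
      rewrite /g; case: (eqVneq p set0) => p0.
        have pe : (p == set0) = true by apply/eqP.
        have := Fp hj2 p0; rewrite pe /= in e3; natgen; lia.
      rewrite (negbTE p0) /= in e3; natgen; lia.
    have := better g tg le; rewrite /g; natgen; lia.
  - have e3 := rw_out (upd (upd f 0 j.+1 S) 1 j.+1 S) 0 (fill p) hj2.
    have n3 := ne_out (upd (upd f 0 j.+1 S) 1 j.+1 S) 0 (fill p) hj2.
    have le : rweight g <= rweight f by rewrite /g; natgen; lia.
    have := better g tg le; rewrite /g; natgen; lia.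
have M2 : 3 <= #|a| + #|b| -> ~~ [&& #|a| == 0, j.+2 < N, #|q| == 0 & #|r| == 0] -> False.
  move=> hs hn.
  pose g := upd (upd (upd (upd f 1 j.+1 S) 2 j.+1 S) 1 j.+2 (fill q)) 2 j.+2 (fill r).
  pose C : pred V := [pred v | at_ v 1 j.+1 || at_ v 2 j.+1 || at_ v 1 j.+2 || at_ v 2 j.+2].
  have gC : forall v, v \in C -> g v != set0.
    move=> v vC; rewrite /g /upd. case: ifP => [_|h4]; first exact: fill0.
    case: ifP => [_|h3]; first exact: fill0.
    case: ifP => [_|h2]; first exact: S0. case: ifP => [_|h1]; first exact: S0.
    by move: vC; rewrite inE /= h1 h2 h3 h4.
  have gO : forall v, v \notin C -> g v = f v.
    move=> v; rewrite inE /= !negb_or => /andP[/andP[/andP[h1 h2] h3] h4].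
    by rewrite /g /upd (negbTE h1) (negbTE h2) (negbTE h3) (negbTE h4).
  have tg : total_rdf arc g.
    apply: (transfer ft gO gC).
    - move=> u v uC auv vC gv0; left.
      move: uC; rewrite inE /= => /orP[/orP[/orP[hu|hu]|hu]|hu].
      + rewrite (atP hu) in auv.
        by case: (outN (isT : 1 < 3) hj auv) => hv; move: vC; rewrite inE /= hv ?orbT.
      + rewrite (atP hu) in auv.
        case: (outN (isT : 2 < 3) hj auv) => hv; first by rewrite at3 in hv.
        by move: vC; rewrite inE /= hv ?orbT.
      + have hj2 : j.+2 < N by case/atV: (hu) => _ <-; exact: ltn_ord.
        rewrite (atP hu) /g upd_other ?upd_same //; exact: fillS.
      + have hj2 : j.+2 < N by case/atV: (hu) => _ <-; exact: ltn_ord.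
        by rewrite (atP hu) /g upd_same //; exact: fillS.
    - move=> v vC fv0; move: (vC); rewrite inE /= => /orP[/orP[/orP[hv|hv]|hv]|hv].
      + exists (pt 2 j.+1); apply: (wit (at_pt (isT : 2 < 3) hj) hv); try lia.
        by apply: gC; rewrite inE /= (at_pt (isT : 2 < 3) hj) ?orbT.
      + exists (pt 1 j.+1); apply: (wit (at_pt (isT : 1 < 3) hj) hv); try lia.
        by apply: gC; rewrite inE /= (at_pt (isT : 1 < 3) hj).
      + exists (pt 1 j.+1); apply: (wit (at_pt (isT : 1 < 3) hj) hv); try lia.
        by apply: gC; rewrite inE /= (at_pt (isT : 1 < 3) hj).
      + exists (pt 2 j.+1); apply: (wit (at_pt (isT : 2 < 3) hj) hv); try lia.
        by apply: gC; rewrite inE /= (at_pt (isT : 2 < 3) hj) ?orbT.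
  have fm := fmin g tg.
  have bt := better g tg.
  have e1 := rw_upd f S (isT : 1 < 3) hj.
  have n1 := ne_upd f S (isT : 1 < 3) hj.
  have e2 := rw_upd (upd f 1 j.+1 S) S (isT : 2 < 3) hj.
  have n2 := ne_upd (upd f 1 j.+1 S) S (isT : 2 < 3) hj.
  rewrite upd_other // in e2 n2.
  rewrite cardS (negbTE S0) in e1 n1 e2 n2.
  case: (ltnP j.+2 N) => hj2.
  - have e3 := rw_upd (upd (upd f 1 j.+1 S) 2 j.+1 S) (fill q) (isT : 1 < 3) hj2.
    have n3 := ne_upd (upd (upd f 1 j.+1 S) 2 j.+1 S) (fill q) (isT : 1 < 3) hj2.
    have e4 := rw_upd (upd (upd (upd f 1 j.+1 S) 2 j.+1 S) 1 j.+2 (fill q)) (fill r) (isT : 2 < 3) hj2.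
    have n4 := ne_upd (upd (upd (upd f 1 j.+1 S) 2 j.+1 S) 1 j.+2 (fill q)) (fill r) (isT : 2 < 3) hj2.
    rewrite !upd_other // ?(negbTE (fill0 _)) ?card_fill in e3 n3 e4 n4; try (by lia).
    have Fr' : #|r| = 0 -> 3 <= #|q| + #|b| by move/cards0_eq; exact: Fr hj2.
    move: fm bt; rewrite /g; natgen; lia.
  - have e3 := rw_out (upd (upd f 1 j.+1 S) 2 j.+1 S) 1 (fill q) hj2.
    have n3 := ne_out (upd (upd f 1 j.+1 S) 2 j.+1 S) 1 (fill q) hj2.
    have e4 := rw_out (upd (upd (upd f 1 j.+1 S) 2 j.+1 S) 1 j.+2 (fill q)) 2 (fill r) hj2.
    have n4 := ne_out (upd (upd (upd f 1 j.+1 S) 2 j.+1 S) 1 j.+2 (fill q)) 2 (fill r) hj2.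
    move: fm bt; rewrite /g; natgen; lia.
case: (ltngtP (#|a| + #|b|) 2) => // h.
- case: (posnP #|b|) => hb0.
    have := Fb (cards0_eq hb0); lia.
  exfalso; apply: M1; lia.
- exfalso; case: (posnP #|a|) => ha; first exact: M1.
  apply: M2 => //; by rewrite (gtn_eqF ha).
Qed.
End Main.

Unset Implicit Arguments.

Theorem lemma4p11 (n : nat) (f : 'I_3 * 'I_n -> {set 'I_3}) :
  3 <= n ->
  gamma_tr_function (@P3Pn_arc n) f ->
  (forall g : 'I_3 * 'I_n -> {set 'I_3},
      gamma_tr_function (@P3Pn_arc n) g -> num_empty f <= num_empty g) ->
  forall j j' : 'I_n, val j' = (val j).+1 ->
  #|f (inord 1, j)| = 1 -> #|f (inord 2, j)| = 1 ->
  #|f (inord 1, j')| + #|f (inord 2, j')| = 2.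
Proof.
case: n f => [//|m] f _ ft fe j j' hj' hA hB.
have E : forall i (c : 'I_m.+1), (inord i, c) = pt m i c by move=> i c; rewrite /pt inord_val.
rewrite !E in hA hB *.
rewrite (hj' : nat_of_ord j' = (nat_of_ord j).+1).
apply: (main ft fe) => //.
rewrite -(hj' : nat_of_ord j' = (nat_of_ord j).+1); exact: ltn_ord.
Qed.
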